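(* Let $g,h\in G(\Gamma)$ and $v\in\Gamma$, and suppose $h$ does not end with $G(\mathrm{lk}(v))$. (1) If $h^{-1}$ begins with $G_v$ but $h^{-1}g$ does not begin with $G_v$, then there is a reduced word $g\equiv g_1\cdots g_n$ and some $m\le n$ such that $h\equiv g_1\cdots g_m$ and $g_m\in G_v$. (2) If $h^{-1}g$ begins with $G_v$ but $h^{-1}$ does not begin with $G_v$, then there is a reduced word $g\equiv g_1\cdots g_n$ and some $m<n$ such that $h\equiv g_1\cdots g_m$ and $g_{m+1}\in G_v$.
   Context: $G(\Gamma)$ is the graph product of groups $\{G_v\}_{v\in\Gamma}$ over a finite simplicial graph $\Gamma$ (the quotient of $\ast_vG_v$ by the normal subgroup generated by $[G_v,G_w]$ for edges $[vw]$). $\mathrm{lk}(v)$ is the set of vertices adjacent to $v$. Words, syllables, shuffles and reduced words are as usual for graph products: a word $(g_1,\dots,g_n)$, $g_i\in G_{v_i}$, is reduced if it cannot be shortened by swapping consecutive syllables from adjacent vertex groups, merging consecutive syllables from the same vertex group, or deleting identity syllables; $g\equiv g_1\cdots g_n$ means this is a reduced word for $g$, and reduced words of $g$ differ by shuffles. An element $g$ begins (resp. ends) with $G_v$ if some reduced word for $g$ has its first (resp. last) syllable in $G_v$; $g$ ends with $G(\mathrm{lk}(v))$ if some reduced word for $g$ has its last syllable in $G_w$ for some $w\in\mathrm{lk}(v)$. *)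

(* Defs.v *)
From mathcomp Require Import all_boot.
Set Implicit Arguments. Unset Strict Implicit. Unset Printing Implicit Defensive.

Record Grp := {
  gcarrier :> Type;
  gmul : gcarrier -> gcarrier -> gcarrier;
  gone : gcarrier;
  ginv : gcarrier -> gcarrier;
  gmulA : forall x y z, gmul x (gmul y z) = gmul (gmul x y) z;
  gmul1 : forall x, gmul x gone = x;
  g1mul : forall x, gmul gone x = x;
  gmulV : forall x, gmul x (ginv x) = gone;
  gVmul : forall x, gmul (ginv x) x = gone
}.

Section GraphProduct.
Variables (V : finType) (adj : rel V) (G : V -> Grp).

Definition syllable := {v : V & G v}.
Definition word := seq syllable.
Definition svert (s : syllable) : V := projT1 s.

Inductive swap_step : word -> word -> Prop :=
| SwapStep u t v1 v2 (a : G v1) (b : G v2) : adj v1 v2 ->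
    swap_step (u ++ existT _ v1 a :: existT _ v2 b :: t)
              (u ++ existT _ v2 b :: existT _ v1 a :: t).

Inductive gp_step : word -> word -> Prop :=
| GpDel u t v : gp_step (u ++ existT _ v (gone (G v)) :: t) (u ++ t)
| GpMerge u t v (a b : G v) :
    gp_step (u ++ existT _ v a :: existT _ v b :: t)
            (u ++ existT _ v (gmul a b) :: t)
| GpSwap w w' : swap_step w w' -> gp_step w w'.

Inductive shuffle : word -> word -> Prop :=
| ShRefl w : shuffle w w
| ShStep w1 w2 w3 : swap_step w1 w2 -> shuffle w2 w3 -> shuffle w1 w3.

(* Two words represent the same element of G(Gamma): the equivalence
   relation generated by the moves (this is the standard monoid
   presentation of the graph product). *)
Inductive gp_equiv : word -> word -> Prop :=
| EqRefl w : gp_equiv w w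
| EqStep w1 w2 w3 : gp_step w1 w2 -> gp_equiv w2 w3 -> gp_equiv w1 w3
| EqStepInv w1 w2 w3 : gp_step w2 w1 -> gp_equiv w2 w3 -> gp_equiv w1 w3.

Definition reduced (w : word) : Prop :=
  forall w', shuffle w w' ->
    (forall u t (s : syllable), w' = u ++ s :: t -> projT2 s <> gone (G (projT1 s))) /\
    (forall u t (s1 s2 : syllable), w' = u ++ s1 :: s2 :: t -> svert s1 <> svert s2).

Definition winv (w : word) : word :=
  rev (map (fun s : syllable => existT _ (projT1 s) (ginv (projT2 s))) w).

Definition begins_with (v : V) (g : word) : Prop :=
  exists (s : syllable) (t : word),
    reduced (s :: t) /\ gp_equiv (s :: t) g /\ svert s = v.

Definition ends_with_lk (v : V) (g : word) : Prop :=
  exists (u : word) (s : syllable),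
    reduced (rcons u s) /\ gp_equiv (rcons u s) g /\ adj v (svert s).

End GraphProduct.

(* Main.v *)
Require Import Defs.
From mathcomp Require Import all_boot.
From Stdlib Require Import Classical_Prop.
Set Implicit Arguments. Unset Strict Implicit. Unset Printing Implicit Defensive.

Section P.
Variables (V : finType) (adj : rel V) (adj_sym : symmetric adj) (adj_irr : irreflexive adj) (G : V -> Grp).
Notation syl := (syllable G).
Notation wrd := (word G).

Lemma shuffle_trans (w1 w2 w3 : wrd) : shuffle adj w1 w2 -> shuffle adj w2 w3 -> shuffle adj w1 w3.
Proof. move=> H; elim: H w3 => [w|a b c Hs _ IH] w3 H3; [exact H3| exact: ShStep Hs (IH _ H3)]. Qed.

Lemma swap_sym (w w' : wrd) : swap_step adj w w' -> swap_step adj w' w.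
Proof. case=> u t v1 v2 a b H; apply: SwapStep; by rewrite adj_sym. Qed.

Lemma shuffle_sym (w w' : wrd) : shuffle adj w w' -> shuffle adj w' w.
Proof.
elim=> [w0|a b c Hs _ IH]; first exact: ShRefl.
exact: shuffle_trans IH (ShStep (swap_sym Hs) (ShRefl _ _)).
Qed.

Lemma shuffle_equiv (w w' : wrd) : shuffle adj w w' -> gp_equiv adj w w'.
Proof. elim=> [w0|a b c Hs _ IH]; [exact: EqRefl | exact: EqStep (GpSwap Hs) IH]. Qed.

Lemma equiv_trans (w1 w2 w3 : wrd) : gp_equiv adj w1 w2 -> gp_equiv adj w2 w3 -> gp_equiv adj w1 w3.
Proof.
move=> H; elim: H w3 => [w|a b c Hs _ IH|a b c Hs _ IH] w3 H3;
 [exact H3| exact: EqStep Hs (IH _ H3)| exact: EqStepInv Hs (IH _ H3)].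
Qed.

Lemma equiv_sym (w w' : wrd) : gp_equiv adj w w' -> gp_equiv adj w' w.
Proof.
elim=> [w0|a b c Hs _ IH|a b c Hs _ IH]; first exact: EqRefl.
  exact: equiv_trans IH (EqStepInv Hs (EqRefl _ _)).
exact: equiv_trans IH (EqStep Hs (EqRefl _ _)).
Qed.

Lemma step_cat (c d a b : wrd) : gp_step adj a b -> gp_step adj (c ++ a ++ d) (c ++ b ++ d).
Proof.
case=> [u t v0|u t v0 x y|w w' []].
- rewrite -!catA /= catA [c ++ (u ++ t ++ d)]catA; exact: GpDel.
- rewrite -!catA /= catA [c ++ (u ++ _)]catA; exact: GpMerge.
- move=> u t v1 v2 x y H; rewrite -!catA /= catA [c ++ (u ++ _)]catA; apply: GpSwap; exact: SwapStep.
Qed.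

Lemma equiv_cat (c d a b : wrd) : gp_equiv adj a b -> gp_equiv adj (c ++ a ++ d) (c ++ b ++ d).
Proof.
elim=> [w0|x y z Hs _ IH|x y z Hs _ IH]; first exact: EqRefl.
  exact: EqStep (step_cat c d Hs) IH.
exact: EqStepInv (step_cat c d Hs) IH.
Qed.

Lemma reduced_shuffle (w w' : wrd) : reduced adj w -> shuffle adj w w' -> reduced adj w'.
Proof. move=> H Hs w'' Hs'; apply: H; exact: shuffle_trans Hs Hs'. Qed.


Fixpoint okv (x : V) (s : seq V) : bool :=
  if s is z :: s' then (z != x) && (adj x z ==> okv x s') else true.
Fixpoint condv (s : seq V) : bool :=
  if s is x :: s' then okv x s' && condv s' else true.

Lemma okv_cat x P Y : okv x (P ++ Y) = okv x P && (all (adj x) P ==> okv x Y).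
Proof.
elim: P => [|z P IH] //=; rewrite IH; case: (z != x) => //=; case: (adj x z) => //=.
Qed.

Lemma condv_swap a p q b : adj p q -> condv (a ++ p :: q :: b) -> condv (a ++ q :: p :: b).
Proof.
move=> Hpq; elim: a => [|c a IH] /=.
  case/andP=> /andP[Hqp Hb] /andP[Hqb Hc].
  rewrite Hpq /= in Hb.
  by rewrite adj_sym Hpq /= Hqb Hb Hc eq_sym Hqp.
case/andP=> Hok /IH ->; rewrite andbT; clear IH.
elim: a Hok => [|d a IH2] /=; last first.
  by case/andP=> -> /=; case: (adj c d) => //= /IH2.
case/andP=> Hpc; case Hcp: (adj c p) => /=.
  case/andP=> Hqc Hrest.
  rewrite Hqc Hpc /=; by case: (adj c q) Hrest.
move=> _.
have Hqc' : (q != c).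
  apply/eqP=> Eqc; by rewrite -Eqc adj_sym Hpq in Hcp.
rewrite Hqc' /= Hpc /=; by case: (adj c q).
Qed.

Lemma condv_neq a p q b : condv (a ++ p :: q :: b) -> p != q.
Proof.
elim: a => [|c a IH] /=; last by case/andP=> _ /IH.
by case/andP=> /andP[H _] _; rewrite eq_sym.
Qed.


Fixpoint nzw (w : wrd) : Prop :=
  if w is s :: w' then projT2 s <> gone (G (projT1 s)) /\ nzw w' else True.

Lemma nzw_cat (a b : wrd) : nzw (a ++ b) <-> nzw a /\ nzw b.
Proof.
elim: a => [|s a IH] /=; first by tauto.
split; first by move=> [H1 /IH [H2 H3]].
by move=> [[H1 H2] H3]; split => //; apply/IH.
Qed.

Lemma swap_pres (w w' : wrd) : swap_step adj w w' ->
  nzw w /\ condv (map (@svert V G) w) -> nzw w' /\ condv (map (@svert V G) w').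
Proof.
case=> u t v1 v2 a b H [Hn Hc]; split.
  move: Hn => /nzw_cat /= [H1 [H2 [H3 H4]]]; apply/nzw_cat => /=; tauto.
move: Hc; rewrite !map_cat /=; exact: condv_swap.
Qed.

Lemma red_char (w : wrd) : nzw w -> condv (map (@svert V G) w) -> reduced adj w.
Proof.
move=> Hn Hc w' Hs.
have [Hn' Hc'] : nzw w' /\ condv (map (@svert V G) w').
  elim: Hs Hn Hc => [//|a b c Hs _ IH] Hn Hc.
  by case: (swap_pres Hs (conj Hn Hc)) => ??; apply: IH.
split.
  move=> u t s E; subst; move: Hn' => /nzw_cat /=; tauto.
move=> u t s1 s2 E; subst; rewrite map_cat /= in Hc'.
by move: (condv_neq Hc') => /eqP.
Qed.

Lemma red_nz (w : wrd) : reduced adj w -> nzw w.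
Proof.
move=> /(_ w (ShRefl _ _)) [H _].
elim: w H => [|s w IH] H //=; split.
  exact: (H [::] w s).
apply: IH => u t s' E; apply: (H (s :: u) t s'); by rewrite E.
Qed.

Lemma okv_bad x (w : wrd) : okv x (map (@svert V G) w) = false ->
  exists m y t, w = m ++ y :: t /\ svert y = x /\ all (fun z => adj x (svert z)) m.
Proof.
elim: w => [|z w IH] //=.
case: eqP => [E _|_ /=]; first by exists [::], z, w.
case Ha: (adj x (svert z)) => //= /IH [m [y [t [E [E2 E3]]]]].
exists (z :: m), y, t; by rewrite E E2 /= Ha E3.
Qed.

Lemma condv_bad (w : wrd) : condv (map (@svert V G) w) = false ->
  exists u x m y t, w = u ++ x :: m ++ y :: t /\ svert x = svert y /\
     all (fun z => adj (svert y) (svert z)) m.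
Proof.
elim: w => [|x w IH] //=.
case Hok: (okv (svert x) (map (@svert V G) w)) => /=.
  move/IH=> [u [x' [m [y [t [E [E2 E3]]]]]]].
  exists (x :: u), x', m, y, t; by rewrite E.
move=> _; move: (okv_bad Hok) => [m [y [t [E [E2 E3]]]]].
exists [::], x, m, y, t; by rewrite E E2.
Qed.

Lemma move_left (pre m : wrd) (y : syl) (t : wrd) :
  all (fun z => adj (svert y) (svert z)) m ->
  shuffle adj (pre ++ m ++ y :: t) (pre ++ y :: m ++ t).
Proof.
elim: m pre => [|z m IH] pre /=; first by move=> _; exact: ShRefl.
case/andP=> Hz Hm.
have := IH (rcons pre z) Hm; rewrite -!cats1 -!catA /= => H.
apply: shuffle_trans H _; clear IH Hm.
case: z Hz => vz a; case: y => vy b /= Hz.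
apply: ShStep (ShRefl _ _); apply: SwapStep; by rewrite adj_sym.
Qed.

Lemma red_condv (w : wrd) : reduced adj w -> condv (map (@svert V G) w).
Proof.
move=> Hr; case Hc: (condv _) => //.
move: (condv_bad Hc) => [u [x [m [y [t [E [E2 E3]]]]]]].
have Hs := move_left (u ++ [:: x]) t E3.
rewrite -catA /= -E in Hs.
case: (Hr _ Hs) => _ /(_ u (m ++ t) x y).
by rewrite -catA /= => /(_ erefl).
Qed.


Section Grp.
Variable K : Grp.
Lemma ginv_gone : @ginv K (gone K) = gone K.
Proof. by rewrite -[LHS]gmul1 gVmul. Qed.
Lemma ginvK (x : K) : @ginv K (@ginv K x) = x.
Proof. by rewrite -[LHS]gmul1 -(gVmul x) gmulA gVmul g1mul. Qed.
End Grp.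

Definition finv (s : syl) : syl := existT _ (projT1 s) (ginv (projT2 s)).

Lemma finvK s : finv (finv s) = s.
Proof. by case: s => x a; rewrite /finv /= ginvK. Qed.

Lemma winv_cat (a b : wrd) : winv (a ++ b) = winv b ++ winv a.
Proof. by rewrite /winv map_cat rev_cat. Qed.

Lemma winv_cons s (w : wrd) : winv (s :: w) = rcons (winv w) (finv s).
Proof. by rewrite /winv /= rev_cons. Qed.

Lemma winv_rcons s (w : wrd) : winv (rcons w s) = finv s :: winv w.
Proof. by rewrite /winv map_rcons rev_rcons. Qed.

Lemma winvK (w : wrd) : winv (winv w) = w.
Proof. elim: w => [|s w IH] //; by rewrite winv_cons winv_rcons IH finvK. Qed.

Lemma winv_cat1 u s (t : wrd) : winv (u ++ s :: t) = winv t ++ finv s :: winv u.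
Proof. by rewrite winv_cat winv_cons -cats1 -catA. Qed.

Lemma winv_cat2 u s1 s2 (t : wrd) : winv (u ++ s1 :: s2 :: t) = winv t ++ finv s2 :: finv s1 :: winv u.
Proof. by rewrite winv_cat1 winv_cons -cats1 -catA. Qed.

Lemma equiv_catl (c a b : wrd) : gp_equiv adj a b -> gp_equiv adj (c ++ a) (c ++ b).
Proof. by move/(equiv_cat c [::]); rewrite !cats0. Qed.
Lemma equiv_catr (d a b : wrd) : gp_equiv adj a b -> gp_equiv adj (a ++ d) (b ++ d).
Proof. by move/(equiv_cat [::] d). Qed.

Lemma cancel_r (w : wrd) : gp_equiv adj (w ++ winv w) [::].
Proof.
elim: w => [|s w IH] /=; first exact: EqRefl.
rewrite winv_cons -cats1 catA.
have := equiv_cat [:: s] [:: finv s] IH; rewrite /= => H.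
apply: equiv_trans H _.
case: s => x a /=.
apply: EqStep (GpMerge adj [::] [::] a (ginv a)) _.
rewrite gmulV; apply: EqStep (GpDel adj [::] [::] x) (EqRefl _ _).
Qed.

Lemma cancel_l (w : wrd) : gp_equiv adj (winv w ++ w) [::].
Proof. by have := cancel_r (winv w); rewrite winvK. Qed.

Lemma equiv_winv (a b : wrd) : gp_equiv adj a b -> gp_equiv adj (winv a) (winv b).
Proof.
move=> H.
have H1 : gp_equiv adj (winv a) (winv a ++ (b ++ winv b)).
  have := equiv_catl (winv a) (equiv_sym (cancel_r b)); by rewrite cats0.
have H2 : gp_equiv adj (winv a ++ (b ++ winv b)) (winv a ++ (a ++ winv b)).
  apply: equiv_catl; apply: equiv_catr; exact: equiv_sym.
have H3 : gp_equiv adj (winv a ++ (a ++ winv b)) (winv b).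
  rewrite catA; have := equiv_catr (winv b) (cancel_l a); by [].
exact: equiv_trans H1 (equiv_trans H2 H3).
Qed.

Lemma swap_winv (a b : wrd) : swap_step adj a b -> swap_step adj (winv a) (winv b).
Proof.
case=> u t v1 v2 x y H; rewrite !winv_cat2 /finv /=.
apply: SwapStep; by rewrite adj_sym.
Qed.

Lemma shuffle_winv (a b : wrd) : shuffle adj a b -> shuffle adj (winv a) (winv b).
Proof.
elim=> [w|x y z Hs _ IH]; first exact: ShRefl.
exact: ShStep (swap_winv Hs) IH.
Qed.

Lemma reduced_winv (w : wrd) : reduced adj w -> reduced adj (winv w).
Proof.
move=> Hr w' Hs.
have Hs' : shuffle adj w (winv w') by have := shuffle_winv Hs; rewrite winvK.
case: (Hr _ Hs') => H1 H2; split.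
  move=> u t s E; subst w'; move: (H1 _ _ _ (winv_cat1 u s t)) => /= H E; apply: H.
  by rewrite E ginv_gone.
move=> u t s1 s2 E; subst w'; move: (H2 _ _ _ _ (winv_cat2 u s1 s2 t)) => /= H E.
by apply: H.
Qed.


Lemma nzw_of (w : wrd) :
  (forall u t (s : syl), w = u ++ s :: t -> projT2 s <> gone (G (projT1 s))) -> nzw w.
Proof.
elim: w => [|s w IH] H //=; split.
  exact: (H [::] w s).
apply: IH => u t s' E; apply: (H (s :: u) t s'); by rewrite E.
Qed.

Lemma exists_red (w : wrd) : exists r, reduced adj r /\ gp_equiv adj r w.
Proof.
elim: {w}(size w).+1 {-2}w (ltnSn (size w)) => // n IH w Hw.
case: (Classical_Prop.classic (exists u t (s : syl), w = u ++ s :: t /\ projT2 s = gone (G (projT1 s)))).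
  move=> [u [t [[x a] [E /= Ea]]]]; subst w a.
  have [|r [Hr Hre]] := IH (u ++ t).
    by move: Hw; rewrite !size_cat /= addnS.
  exists r; split => //; apply: equiv_trans Hre _.
  exact: EqStepInv (GpDel adj u t x) (EqRefl _ _).
move=> Hno.
have Hn : nzw w.
  apply: nzw_of => u t s E Es; apply: Hno; by exists u, t, s.
case Hc: (condv (map (@svert V G) w)).
  exists w; split; [exact: red_char | exact: EqRefl].
move: (condv_bad Hc) => [u [x [m [y [t [E [E2 E3]]]]]]].
have Hs := move_left (u ++ [:: x]) t E3.
rewrite -!catA /= -E in Hs.
move: Hs E Hw; case: x E2 => vx a; case: y {E3} => vy b /= E2; subst vy.
move=> Hs E Hw.
have [|r [Hr Hre]] := IH (u ++ existT _ vx (gmul a b) :: m ++ t).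
  by move: Hw; rewrite E !size_cat /= !size_cat /= !addnS.
exists r; split => //; apply: equiv_trans Hre _; apply: equiv_sym.
apply: equiv_trans (shuffle_equiv Hs) _.
exact: EqStep (GpMerge adj u (m ++ t) a b) (EqRefl _ _).
Qed.

Lemma cat_condv (p : wrd) Y : condv (map (@svert V G) p) -> condv Y ->
  (forall p1 s p2, p = p1 ++ s :: p2 -> all (fun z => adj (svert s) (svert z)) p2 ->
     okv (svert s) Y) -> condv (map (@svert V G) p ++ Y).
Proof.
elim: p => [|x p IH] //= /andP[Hok Hp] HY H.
rewrite okv_cat Hok /=; apply/andP; split.
  apply/implyP=> Hall; apply: (H [::] x p erefl); by rewrite all_map in Hall.
apply: IH => // p1 s p2 E; apply: (H (x :: p1)); by rewrite E.
Qed.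

Lemma red_cat (p y : wrd) : reduced adj p -> reduced adj y ->
  (forall p1 s p2, p = p1 ++ s :: p2 -> all (fun z => adj (svert s) (svert z)) p2 ->
     okv (svert s) (map (@svert V G) y)) -> reduced adj (p ++ y).
Proof.
move=> Hp Hy H; apply: red_char.
  by apply/nzw_cat; split; apply: red_nz.
rewrite map_cat; apply: cat_condv => //; exact: red_condv.
Qed.

Lemma move_right (p1 : wrd) s p2 : all (fun z => adj (svert s) (svert z)) p2 ->
  shuffle adj (p1 ++ s :: p2) (rcons (p1 ++ p2) s).
Proof.
move=> H; have := shuffle_sym (move_left p1 [::] H).
by rewrite cats0 -cats1 -catA.
Qed.

Lemma begins_of_okv (y w : wrd) x : reduced adj y -> gp_equiv adj y w ->
  okv x (map (@svert V G) y) = false -> begins_with adj x w.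
Proof.
move=> Hy He /okv_bad [m [y0 [t [E [E2 E3]]]]].
have Hs : shuffle adj y (y0 :: m ++ t).
  have := move_left [::] t (m := m) (y := y0); rewrite E2 -E; by apply.
exists y0, (m ++ t); split; first exact: reduced_shuffle Hs.
split => //; apply: equiv_trans He; exact: equiv_sym (shuffle_equiv Hs).
Qed.

Lemma equiv_comb (p h g y : wrd) : gp_equiv adj p h -> gp_equiv adj y (winv h ++ g) ->
  gp_equiv adj (p ++ y) g.
Proof.
move=> H1 H2.
apply: equiv_trans (equiv_catr y H1) _.
apply: equiv_trans (equiv_catl h H2) _.
rewrite catA; exact: (equiv_catr g (cancel_r h)).
Qed.

Lemma main (g h : wrd) (v : V) :
  ~ ends_with_lk adj v h ->
  ((begins_with adj v (winv h) /\ ~ begins_with adj v (winv h ++ g)) ->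
     exists (u : word G) (s : syllable G) (t : word G),
       reduced adj (u ++ s :: t) /\ gp_equiv adj (u ++ s :: t) g /\
       reduced adj (rcons u s) /\ gp_equiv adj (rcons u s) h /\
       svert s = v)
  /\
  ((begins_with adj v (winv h ++ g) /\ ~ begins_with adj v (winv h)) ->
     exists (u : word G) (s : syllable G) (t : word G),
       reduced adj (u ++ s :: t) /\ gp_equiv adj (u ++ s :: t) g /\
       reduced adj u /\ gp_equiv adj u h /\
       svert s = v).
Proof.
move=> Hnl; split.
  case=> [[s [t [Hr [He Hv]]]] Hnb].
  have Hpr : reduced adj (rcons (winv t) (finv s)) by rewrite -winv_cons; exact: reduced_winv.
  have Hpe : gp_equiv adj (rcons (winv t) (finv s)) h.
    by rewrite -winv_cons -[h]winvK; exact: equiv_winv.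
  have [y [Hy Hye]] := exists_red (winv h ++ g).
  exists (winv t), (finv s), y.
  rewrite -cat_rcons; split; [|split; [exact: equiv_comb Hpe Hye| by do 2 (split => //)]].
  apply: red_cat => // p1 s' p2; case/lastP: p2 => [|p2 z].
    rewrite cats1 => /rcons_inj [_ <-] _.
    case Hok: okv => //; exfalso; apply: Hnb; apply: (begins_of_okv Hy Hye).
    by rewrite /= -Hv.
  move=> E Hall0; have Hs := move_right p1 Hall0; rewrite -E in Hs.
  move: E; rewrite -rcons_cons -rcons_cat => /rcons_inj [E1 E2].
  move: Hall0; rewrite all_rcons => /andP[Ha Hall].
  exfalso; apply: Hnl; exists (p1 ++ rcons p2 z), s'.
  split; first exact: reduced_shuffle Hs.
  split; first by apply: equiv_trans Hpe; exact: equiv_sym (shuffle_equiv Hs).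
  have Ez : svert z = v by rewrite -E2 -Hv.
  by rewrite adj_sym -Ez.
case=> [[s [t [Hr [He Hv]]]] Hnb].
have [p [Hp Hpe]] := exists_red h.
exists p, s, t; split; [|split; [exact: equiv_comb Hpe He| by do 2 (split => //)]].
apply: red_cat => // p1 s' p2 E Hall.
have Hs := move_right p1 Hall; rewrite -E in Hs.
have Hqr := reduced_shuffle Hp Hs.
have Hqe : gp_equiv adj (rcons (p1 ++ p2) s') h.
  apply: equiv_trans Hpe; exact: equiv_sym (shuffle_equiv Hs).
rewrite /= Hv; apply/andP; split.
  apply/eqP=> Ev; apply: Hnb; exists (finv s'), (winv (p1 ++ p2)).
  rewrite -winv_rcons; split; first exact: reduced_winv.
  split; [exact: equiv_winv | by rewrite Ev].
case Ha: (adj _ _) => //; exfalso; apply: Hnl; exists (p1 ++ p2), s'.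
by rewrite adj_sym.
Qed.

End P.

Theorem mainTheorem5 (V : finType) (adj : rel V)
  (adj_sym : symmetric adj) (adj_irr : irreflexive adj)
  (G : V -> Grp) (g h : word G) (v : V) :
  ~ ends_with_lk adj v h ->
  ((begins_with adj v (winv h) /\ ~ begins_with adj v (winv h ++ g)) ->
     exists (u : word G) (s : syllable G) (t : word G),
       reduced adj (u ++ s :: t) /\ gp_equiv adj (u ++ s :: t) g /\
       reduced adj (rcons u s) /\ gp_equiv adj (rcons u s) h /\
       svert s = v)
  /\
  ((begins_with adj v (winv h ++ g) /\ ~ begins_with adj v (winv h)) ->
     exists (u : word G) (s : syllable G) (t : word G),
       reduced adj (u ++ s :: t) /\ gp_equiv adj (u ++ s :: t) g /\
       reduced adj u /\ gp_equiv adj u h /\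
       svert s = v).
Proof. exact: (main adj_sym). Qed.
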